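(* Let $m\ge1$, let $\Theta$ be a non-degenerate quadratic form of type $\pm1$ on $V=\mathbb{F}_4^{2m}$ with polar symplectic form $\langle\cdot,\cdot\rangle$, and let $\Theta^*=\mathrm{Tr}_{\mathbb{F}_4/\mathbb{F}_2}\circ\Theta$ and $\langle u,v\rangle^*=\mathrm{Tr}_{\mathbb{F}_4/\mathbb{F}_2}(\langle u,v\rangle)$, regarding $V$ as $\mathbb{F}_2^{4m}$. Let $X=\{a\in V:\Theta^*(a)=1\}$. Let $G_1$ be the graph on $X$ with $a\sim b$ iff $a\neq b$ and $\langle a,b\rangle^*=0$ (a copy of $NO^{\pm}(4m,2)$), and $G_2$ the graph on $X$ with $a\sim b$ iff $a\ne b$ and $\Theta(a+b)=\langle a,b\rangle^2$ (a copy of $NO^{\mp}(2m+1,4)$). Let $\lambda\in\mathbb{F}_4\setminus\mathbb{F}_2$ be a root of $x^2+x+1$ and $A=\{a\in\mathbb{F}_4^{2m}:\Theta(a)=\lambda\}$, $B=\{a\in\mathbb{F}_4^{2m}:\Theta(a)=\lambda+1\}$. Then $X=A\cup B$ and the Seidel switching between $G_1$ and $G_2$ is the switching with respect to the sets $A$, $B$; that is, $G_2$ is obtained from $G_1$ by Seidel switching with respect to $A$ (equivalently $B$). Moreover $|A|=|B|=2^{4m-2}\mp2^{2m-2}$, and the subgraphs induced on $A$ and on $B$ are regular of degree $2^{4m-3}\mp2^{2m-2}-1$.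
   Context: For a quadratic form $\Theta$ on $\mathbb{F}_q^{n}$ ($q$ even) the polar form is $f(u,v)=\Theta(u+v)+\Theta(u)+\Theta(v)$. A form on $\mathbb{F}_q^{2m}$ is non-degenerate if $f$ is non-degenerate, of type $+1$ (hyperbolic) if its Witt index is $m$, of type $-1$ (elliptic) if it is $m-1$. Seidel switching of a graph with respect to a vertex subset $Y$ replaces all edges between $Y$ and its complement by non-edges and all such non-edges by edges, leaving the rest unchanged. Signs are read consistently (upper with upper). *)

(* Defs.v *)
From HB Require Import structures.
From mathcomp Require Import all_boot all_order all_algebra.
Set Implicit Arguments. Unset Strict Implicit. Unset Printing Implicit Defensive.
Import GRing.Theory.
Local Open Scope ring_scope.

Definition polar (F : fieldType) (n : nat) (Q : 'rV[F]_n -> F) (u v : 'rV[F]_n) : F :=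
  Q (u + v) + Q u + Q v.

Definition is_quadform (F : fieldType) (n : nat) (Q : 'rV[F]_n -> F) : Prop :=
  [/\ forall (c : F) v, Q (c *: v) = c ^+ 2 * Q v,
      forall u1 u2 v, polar Q (u1 + u2) v = polar Q u1 v + polar Q u2 v,
      forall (c : F) u v, polar Q (c *: u) v = c * polar Q u v,
      forall u v1 v2, polar Q u (v1 + v2) = polar Q u v1 + polar Q u v2 &
      forall (c : F) u v, polar Q u (c *: v) = c * polar Q u v].

Definition qf_nondegenerate (F : fieldType) (n : nat) (Q : 'rV[F]_n -> F) : Prop :=
  forall u, (forall v, polar Q u v = 0) -> u = 0.

Definition totally_singular (F : fieldType) (n k : nat) (Q : 'rV[F]_n -> F)
  (U : 'M[F]_(k, n)) : Prop :=
  forall v : 'rV[F]_n, (v <= U)%MS -> Q v = 0.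

Definition witt_index (F : fieldType) (n : nat) (Q : 'rV[F]_n -> F) (w : nat) : Prop :=
  (exists U : 'M[F]_n, totally_singular Q U /\ \rank U = w) /\
  (forall U : 'M[F]_n, totally_singular Q U -> (\rank U <= w)%N).

(* type of a non-degenerate form on F^(2m): +1 (plus = true) if Witt index m,
   -1 (plus = false) if Witt index m-1 *)
Definition qf_type (F : fieldType) (m : nat) (Q : 'rV[F]_(2 * m) -> F) (plus : bool) : Prop :=
  witt_index Q (if plus then m else m.-1).

(* absolute trace F_4 -> F_2 (values in the prime subfield {0,1} of F) *)
Definition tr4 (F : fieldType) (x : F) : F := x + x ^+ 2.

Definition seidel_switch (T : finType) (adj : rel T) (Y : {set T}) : rel T :=
  fun a b => if (a \in Y) != (b \in Y) then (a != b) && ~~ adj a b else adj a b.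

(* Main.v *)
Require Import Defs.
From HB Require Import structures.
From mathcomp Require Import all_boot all_order all_algebra all_field zify.
Import GRing.Theory.
Local Open Scope ring_scope.
Set Implicit Arguments. Unset Strict Implicit. Unset Printing Implicit Defensive.

Section Field.
Variables (F : finFieldType) (hF : #|F| = 4%N).

Lemma char2F : (2%N \in [pchar F]).
Proof. by apply: (@card_finPcharP _ 2 2). Qed.

Lemma addxx (x : F) : x + x = 0.
Proof. exact: (addrr_pchar2 char2F x). Qed.

Lemma oppF (x : F) : - x = x.
Proof. by apply/eqP; rewrite eq_sym -subr_eq0 opprK addxx. Qed.

Lemma subF (x y : F) : x - y = x + y.
Proof. by rewrite oppF. Qed.

Lemma exp4 (x : F) : x ^+ 4 = x.
Proof. by rewrite -{2}(expf_card x) hF. Qed.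

Lemma sqrD (x y : F) : (x + y) ^+ 2 = x ^+ 2 + y ^+ 2.
Proof. by rewrite sqrrD mulr2n addxx addr0. Qed.

Lemma sqrt_ex (c : F) : exists s : F, s ^+ 2 = c.
Proof. by exists (c ^+ 2); rewrite -exprM exp4. Qed.

Lemma tr4_0 (x : F) : (tr4 x == 0) = (x == 0) || (x == 1).
Proof.
rewrite /tr4 -{1}(mulr1 x) expr2 -mulrDr mulf_eq0; congr (_ || _).
by rewrite -[1 + x]oppF opprD subr_eq0 eq_sym oppF.
Qed.

Lemma tr4_01 (x : F) : (tr4 x == 0) || (tr4 x == 1).
Proof.
have h : tr4 x * (tr4 x - 1) = 0.
  rewrite mulrBr mulr1 -expr2 /tr4 sqrD -exprM exp4 subF.
  by rewrite [x + _]addrC addxx.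
by move: h => /eqP; rewrite mulf_eq0 subr_eq0.
Qed.

Section Root.
Variables (mu : F) (hmu : mu ^+ 2 + mu + 1 = 0).

Lemma mu2 : mu ^+ 2 = mu + 1.
Proof. by apply/eqP; rewrite -subr_eq0 subF addrA hmu. Qed.

Lemma mu_neq0 : mu != 0.
Proof. by apply/eqP => h; move: hmu; rewrite h expr0n /= !add0r; apply/eqP; rewrite oner_eq0. Qed.

Lemma mu_neq1 : mu != 1.
Proof. by apply/eqP => h; move: hmu; rewrite h expr1n addxx add0r; apply/eqP; rewrite oner_eq0. Qed.

Lemma mu1_neq0 : mu + 1 != 0.
Proof. by rewrite -[1]oppF subr_eq0 mu_neq1. Qed.

Lemma mu1_neq1 : mu + 1 != 1.
Proof. by rewrite -subr_eq0 addrK mu_neq0. Qed.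

Lemma mu1_neqmu : mu + 1 != mu.
Proof. by rewrite -subr_eq0 [mu + 1]addrC addrK oner_eq0. Qed.

Lemma enumF (x : F) : [|| x == 0, x == 1, x == mu | x == mu + 1].
Proof.
have sub : 0 |: (1 |: (mu |: [set mu + 1])) = [set: F].
  apply/eqP; rewrite eqEcard subsetT cardsT hF.
  rewrite !cardsU1 cards1 !inE !negb_or.
  rewrite !(eq_sym 0) !(eq_sym 1) (eq_sym mu).
  rewrite ?mu1_neq0 ?mu1_neq1 ?mu1_neqmu ?mu_neq0 ?mu_neq1 ?oner_eq0.
  have h1 : (0 != 1 :> F) by rewrite eq_sym oner_eq0.
  have h2 : 0 != mu by rewrite eq_sym mu_neq0.
  have h3 : mu != mu + 1 by rewrite eq_sym mu1_neqmu.
  by rewrite h1 h2 h3.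
have : x \in [set: F] by rewrite inE.
by rewrite -sub !inE; case/or4P => ->; rewrite ?orbT.
Qed.

Lemma sumF (g : F -> nat) : (\sum_(d : F) g d = g 0%R + g 1%R + g mu + g (mu + 1)%R)%N.
Proof.
rewrite (bigD1 0) //= (bigD1 1) ?oner_neq0 //= (bigD1 mu) /= ?mu_neq0 ?mu_neq1 //.
rewrite (bigD1 (mu + 1)) /= ?mu1_neq0 ?mu1_neq1 ?mu1_neqmu // big_pred0.
  by rewrite addn0 !addnA.
by move=> x; case/or4P: (enumF x) => /eqP ->; rewrite ?eqxx ?andbF.
Qed.

Lemma tr4_1 (x : F) : (tr4 x == 1) = (x == mu) || (x == mu + 1).
Proof.
case/or4P: (enumF x) => /eqP ->; rewrite /tr4.
- rewrite expr0n addr0 (eq_sym 0 1) (eq_sym 0 mu) (eq_sym 0 (mu + 1)).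
  by rewrite oner_eq0 (negbTE mu_neq0) (negbTE mu1_neq0).
- rewrite expr1n addxx (eq_sym 0 1) (eq_sym 1 mu) (eq_sym 1 (mu + 1)).
  by rewrite oner_eq0 (negbTE mu_neq1) (negbTE mu1_neq1).
- by rewrite mu2 addrA addxx add0r !eqxx.
- by rewrite sqrD mu2 expr1n addrA addxx add0r !eqxx orbT.
Qed.

End Root.
End Field.

Section QF.
Variables (F : finFieldType) (hF : #|F| = 4%N) (n : nat) (Q : 'rV[F]_n -> F)
  (hQ : is_quadform Q).
Local Notation pol := (polar Q).

Lemma QZ c v : Q (c *: v) = c ^+ 2 * Q v. Proof. by case: hQ. Qed.
Lemma polDl u1 u2 v : pol (u1 + u2) v = pol u1 v + pol u2 v. Proof. by case: hQ. Qed.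
Lemma polZl c u v : pol (c *: u) v = c * pol u v. Proof. by case: hQ. Qed.
Lemma polDr u v1 v2 : pol u (v1 + v2) = pol u v1 + pol u v2. Proof. by case: hQ. Qed.
Lemma polZr c u v : pol u (c *: v) = c * pol u v. Proof. by case: hQ. Qed.

Lemma Q0 : Q 0 = 0.
Proof. by rewrite -(scale0r 0) QZ expr0n /= mul0r. Qed.

Lemma polC u v : pol u v = pol v u.
Proof. by rewrite /polar [u + v]addrC -!addrA [Q u + _]addrC. Qed.

Lemma pol0l v : pol 0 v = 0.
Proof. by rewrite -(scale0r 0) polZl mul0r. Qed.
Lemma pol0r v : pol v 0 = 0.
Proof. by rewrite polC pol0l. Qed.

Lemma QD u v : Q (u + v) = Q u + Q v + pol u v.
Proof. by rewrite /polar -(addrA (Q (u + v))) [RHS]addrC -addrA (addxx hF) addr0. Qed.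

Lemma polxx u : pol u u = 0.
Proof.
rewrite /polar; have -> : u + u = (1 + 1) *: u by rewrite scalerDl scale1r.
by rewrite QZ (addxx hF) expr0n /= mul0r add0r (addxx hF).
Qed.

Definition gram : 'M[F]_n := \matrix_(i, j) pol (delta_mx 0 i) (delta_mx 0 j).

Lemma pol_suml (c : 'I_n -> F) v :
  pol (\sum_(i < n) c i *: delta_mx 0 i) v = \sum_(i < n) c i * pol (delta_mx 0 i) v.
Proof.
elim/big_rec2: _ => [|i y1 y2 _ <-]; first by rewrite pol0l.
by rewrite polDl polZl.
Qed.

Lemma pol_sumr (c : 'I_n -> F) u :
  pol u (\sum_(i < n) c i *: delta_mx 0 i) = \sum_(i < n) c i * pol u (delta_mx 0 i).
Proof.
elim/big_rec2: _ => [|i y1 y2 _ <-]; first by rewrite pol0r.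
by rewrite polDr polZr.
Qed.

Lemma polE u v : pol u v = (u *m gram *m v^T) 0 0.
Proof.
rewrite {1}(row_sum_delta u) pol_suml.
under eq_bigr => i _ do rewrite {1}(row_sum_delta v) pol_sumr.
rewrite mxE.
under [RHS]eq_bigr => j _ do rewrite !mxE big_distrl /=.
rewrite exchange_big /=; apply: eq_bigr => i _.
rewrite big_distrr /=; apply: eq_bigr => j _.
by rewrite !mxE -mulrA [v 0 j * _]mulrC.
Qed.

Lemma gram_unit : qf_nondegenerate Q -> gram \in unitmx.
Proof.
move=> hnd; rewrite -row_free_unit -kermx_eq0; apply/eqP.
apply/eqP; apply: contraT => /rowV0Pn [u /sub_kermxP uP0 u0].
have : u = 0.
  apply: hnd => v; by rewrite polE uP0 mul0mx mxE.
by move/eqP: u0.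
Qed.

End QF.

Lemma card_part (T : finType) (K : finType) (S : {set T}) (f : T -> K) :
  (#|S| = \sum_(d : K) #|[set u in S | f u == d]|)%N.
Proof.
rewrite -sum1_card (partition_big f predT) //.
apply: eq_bigr => d _; rewrite -sum1_card; apply: eq_bigl => u.
by rewrite inE.
Qed.

Lemma card_rowspace (F : finFieldType) m n (M : 'M[F]_(m, n)) :
  #|[set v : 'rV[F]_n | (v <= M)%MS]| = (#|F| ^ \rank M)%N.
Proof.
have -> : [set v : 'rV[F]_n | (v <= M)%MS] = [set x *m row_base M | x : 'rV_(\rank M)].
  apply/setP => v; rewrite inE; apply/idP/imsetP.
  - move=> vM; have : (v <= row_base M)%MS by rewrite eq_row_base.
    by case/submxP => x ->; exists x.
  - case=> x _ ->; apply: submx_trans (submxMl _ _) _.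
    by rewrite eq_row_base.
rewrite card_imset; last exact: row_free_inj (row_base_free M).
by rewrite card_mx mul1n.
Qed.

Section Fiber.
Variables (F : finFieldType) (hF : #|F| = 4%N) (n : nat).

Lemma fiber_card (S : {set 'rV[F]_n}) (f : 'rV[F]_n -> F) :
  (forall u v, u \in S -> v \in S -> u + v \in S) ->
  (forall c u, u \in S -> c *: u \in S) ->
  (forall u v, f (u + v) = f u + f v) -> (forall c u, f (c *: u) = c * f u) ->
  forall b0, b0 \in S -> f b0 != 0 ->
  forall d, (4 * #|[set u in S | f u == d]| = #|S|)%N.
Proof.
move=> SD SZ fD fZ b0 b0S fb0 d.
pose e := (f b0)^-1 *: b0.
have eS : e \in S by exact: SZ.
have fe : f e = 1 by rewrite fZ mulVf.
have le : forall d1 d2, (#|[set u in S | f u == d1]| <= #|[set u in S | f u == d2]|)%N.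
  move=> d1 d2; rewrite -(card_imset _ (addIr ((d2 - d1) *: e))).
  apply: subset_leq_card; apply/subsetP => _ /imsetP [u hu ->].
  move: hu; rewrite !inE => /andP [uS /eqP fu].
  by rewrite SD ?SZ //= fD fZ fe mulr1 fu addrC subrK eqxx.
have eq0 : forall d', #|[set u in S | f u == d']| = #|[set u in S | f u == 0]|.
  by move=> d'; apply/eqP; rewrite eqn_leq !le.
rewrite (card_part S f).
under eq_bigr => d' _ do rewrite eq0.
by rewrite sum_nat_const cardT -cardE hF eq0.
Qed.

End Fiber.

Lemma double_count (T1 T2 : finType) (A : {set T1}) (B : {set T2}) (R : T1 -> T2 -> bool) :
  (\sum_(x in A) #|[set y in B | R x y]| = \sum_(y in B) #|[set x in A | R x y]|)%N.
Proof.
under eq_bigr => x _ do rewrite -sum1_card.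
rewrite (exchange_big_dep (fun y => y \in B)) /=; last by move=> x y _; rewrite inE => /andP [].
apply: eq_bigr => y yB; rewrite -sum1_card; apply: eq_bigl => x.
by rewrite !inE yB.
Qed.

Lemma cardsKsplit (T : finType) (K : {set T}) (P : pred T) :
  #|[set u | P u]| = (#|[set u in K | P u]| + #|[set u in ~: K | P u]|)%N.
Proof.
rewrite -(cardsID K [set u | P u]); congr addn; apply: eq_card => u;
by rewrite !inE andbC.
Qed.

Section Count.
Variables (F : finFieldType) (hF : #|F| = 4%N) (n : nat) (Q : 'rV[F]_n -> F)
  (hQ : is_quadform Q) (hnd : qf_nondegenerate Q).
Local Notation pol := (polar Q).
Local Notation P := (gram Q).

Lemma vaddxx (w : 'rV[F]_n) : w + w = 0.
Proof.
have -> : w + w = (1 + 1) *: w by rewrite scalerDl scale1r.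
by rewrite (addxx hF) scale0r.
Qed.

Variables (U : 'M[F]_n) (hts : totally_singular Q U).
Variables (W K : {set 'rV[F]_n}) (hW : W = [set v : 'rV[F]_n | (v <= U)%MS])
  (hK : K = [set v : 'rV[F]_n | U *m P *m v^T == 0]).

Lemma WD u v : u \in W -> v \in W -> u + v \in W.
Proof. by rewrite hW !inE => ? ?; rewrite addmx_sub. Qed.
Lemma WZ c u : u \in W -> c *: u \in W.
Proof. by rewrite hW !inE => ?; rewrite scalemx_sub. Qed.
Lemma W0 : 0 \in W.
Proof. by rewrite hW inE sub0mx. Qed.
Lemma QW w : w \in W -> Q w = 0.
Proof. by rewrite hW inE => /hts. Qed.

Lemma polWK w v : w \in W -> v \in K -> pol w v = 0.
Proof.
rewrite hW hK !inE => /submxP [x ->] /eqP h.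
by rewrite (polE hQ) -!mulmxA (mulmxA U) h mulmx0 mxE.
Qed.

Lemma notK v : v \notin K -> exists2 w, w \in W & pol w v != 0.
Proof.
move=> hv.
have [i hi] : exists i, (U *m P *m v^T) i 0 != 0.
  apply/existsP; apply: contraR hv => /existsPn h; rewrite hK inE.
  apply/eqP/matrixP => i j; rewrite ord1 [RHS]mxE.
  by move: (h i); rewrite negbK => /eqP.
exists (row i U); first by rewrite hW inE row_sub.
by rewrite (polE hQ) -!row_mul mxE.
Qed.

Lemma WK w : w \in W -> w \in K.
Proof.
move=> wW; rewrite hK inE; apply/eqP/matrixP => i j; rewrite ord1 [RHS]mxE.
have rW : row i U \in W by rewrite hW inE row_sub.
have -> : (U *m P *m w^T) i 0 = pol (row i U) w by rewrite (polE hQ) -!row_mul [RHS]mxE.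
by rewrite /polar (QW (WD rW wW)) (QW rW) (QW wW) !addr0.
Qed.

Lemma KD u v : u \in K -> v \in K -> u + v \in K.
Proof. by rewrite hK !inE => /eqP hu /eqP hv; rewrite linearD /= mulmxDr hu hv addr0. Qed.

Lemma notKD v w : v \notin K -> w \in W -> v + w \notin K.
Proof.
move=> hv wW; apply: contra hv => h.
have -> : v = (v + w) + w by rewrite -addrA vaddxx addr0.
by rewrite KD // WK.
Qed.

Lemma cardW : #|W| = (4 ^ \rank U)%N.
Proof. by rewrite hW card_rowspace hF. Qed.

Lemma cardK : #|K| = (4 ^ (n - \rank U))%N.
Proof.
have -> : K = [set v : 'rV[F]_n | (v <= kermx (U *m P)^T)%MS].
  apply/setP => v; rewrite hK !inE; apply/eqP/sub_kermxP => h.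
    by rewrite -[v]trmxK -trmx_mul h trmx0.
  by rewrite -[U *m P *m v^T]trmxK trmx_mul trmxK h trmx0.
rewrite card_rowspace hF mxrank_ker mxrank_tr mxrankMfree //.
by rewrite row_free_unit gram_unit.
Qed.

Lemma out_count c :
  (4 * #|[set u in ~: K | Q u == c]| = 4 ^ n - 4 ^ (n - \rank U))%N.
Proof.
set O := ~: K.
have cO : #|O| = (4 ^ n - 4 ^ (n - \rank U))%N.
  have := cardsC K; rewrite cardK card_mx hF mul1n => <-.
  by rewrite addKn.
have hw : forall w, w \in W ->
    #|[set v in O | Q (v + w) == c]| = #|[set u in O | Q u == c]|.
  move=> w wW; apply/eqP; rewrite eqn_leq; apply/andP; split.
    rewrite -(card_imset _ (addIr w)); apply: subset_leq_card.
    apply/subsetP => _ /imsetP [u hu ->]; move: hu; rewrite !inE => /andP [uO ->].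
    by rewrite andbT notKD.
  rewrite -(card_imset _ (addIr w)); apply: subset_leq_card.
  apply/subsetP => _ /imsetP [u hu ->]; move: hu; rewrite !inE => /andP [uO /eqP qu].
  by rewrite notKD // -addrA vaddxx addr0 qu eqxx.
have hv : forall v, v \in O -> (4 * #|[set w in W | Q (v + w) == c]| = #|W|)%N.
  move=> v vO.
  have -> : [set w in W | Q (v + w) == c] = [set w in W | pol v w == c - Q v].
    apply/setP => w; rewrite !inE; case wW: (w \in W) => //=.
    by rewrite QD // (QW wW) addr0 [RHS]eq_sym subr_eq [pol v w + _]addrC eq_sym.
  have [w0 w0W pw0] : exists2 w, w \in W & pol w v != 0 by apply: notK; rewrite -in_setC.
  apply: (@fiber_card F hF n W (pol v) WD WZ (polDr hQ v) (fun c u => polZr hQ c v u) w0 w0W).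
  by rewrite polC.
have e1 : (\sum_(w in W) #|[set v in O | Q (v + w) == c]| = #|W| * #|[set u in O | Q u == c]|)%N.
  by rewrite (eq_bigr _ hw) sum_nat_const.
have e2 : (4 * \sum_(v in O) #|[set w in W | Q (v + w) == c]| = #|O| * #|W|)%N.
  by rewrite big_distrr /= (eq_bigr _ hv) sum_nat_const.
rewrite double_count in e1.
have W0' : (0 < #|W|)%N by apply/card_gt0P; exists 0; exact: W0.
rewrite -cO; apply/eqP; rewrite -(eqn_pmul2r W0') -e2 e1.
by rewrite [(#|W| * _)%N]mulnC mulnA.
Qed.

Lemma plus_case : (\rank U + \rank U = n)%N ->
  #|[set u in K | Q u == 0]| = (4 ^ (n - \rank U))%N.
Proof.
move=> hr.
have WeqK : W = K.
  apply/eqP; rewrite eqEcard; apply/andP; split.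
    by apply/subsetP => w; exact: WK.
  have e : (n - \rank U = \rank U)%N by move: hr; set r := \rank U; lia.
  by rewrite cardW cardK e.
rewrite -cardK; apply: eq_card => u; rewrite in_set.
by case uK: (u \in K) => //=; rewrite QW ?eqxx // WeqK.
Qed.

Lemma minus_case :
  (forall V : 'M[F]_n, totally_singular Q V -> (\rank V <= \rank U)%N) ->
  #|[set u in K | Q u == 0]| = (4 ^ \rank U)%N.
Proof.
move=> hmax; rewrite -cardW; apply: eq_card => u; rewrite in_set.
apply/idP/idP; last by move=> uW; rewrite (WK uW) (QW uW) eqxx.
case/andP => uK /eqP qu; apply: contraT => uW.
have hu : ~~ (u <= U)%MS by move: uW; rewrite hW inE.
have ts : totally_singular Q (U + u)%MS.
  move=> v /sub_addsmxP [[x y] /= ->].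
  have xW : x *m U \in W by rewrite hW inE submxMl.
  rewrite (mx11_scalar y) mul_scalar_mx QD // QZ // qu mulr0 addr0.
  by rewrite QW // add0r polZr // polWK // mulr0.
have := hmax _ ts.
have : (U < U + u)%MS.
  rewrite ltmxE addsmxSl /=; apply: contra hu => h.
  exact: submx_trans (addsmxSr U u) h.
by rewrite ltmxErank => /andP [_ lt]; rewrite leqNgt lt.
Qed.

End Count.

Section Deg.
Variables (F : finFieldType) (hF : #|F| = 4%N) (n : nat) (Q : 'rV[F]_n -> F)
  (hQ : is_quadform Q) (hnd : qf_nondegenerate Q).
Variables (mu : F) (hmu : mu ^+ 2 + mu + 1 = 0) (a : 'rV[F]_n) (ha : Q a = mu).
Local Notation pol := (polar Q).

Definition N1 c d := #|[set u in [set b | Q b == c] | pol a u == d]|.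
Definition N2 c d := #|[set u in [set b | pol a b == d] | Q u == c]|.

Lemma N12 c d : N1 c d = N2 c d.
Proof. by apply: eq_card => u; rewrite !inE andbC. Qed.

Lemma a_neq0 : a != 0.
Proof.
apply/eqP => a0; move: ha; rewrite a0 (Q0 hQ) => /esym/eqP.
by rewrite (negbTE (mu_neq0 hmu)).
Qed.

Lemma fib_pol d : (4 * #|[set b | pol a b == d]| = 4 ^ n)%N.
Proof.
have [b0 hb0] : exists b0, pol a b0 != 0.
  apply/existsP; apply: contraR a_neq0 => /existsPn h; apply/eqP.
  by apply: hnd => v; apply/eqP; move: (h v); rewrite negbK.
have := @fiber_card F hF n [set: 'rV[F]_n] (pol a) (fun _ _ _ _ => in_setT _)
  (fun _ _ _ => in_setT _) (polDr hQ a) (fun c u => polZr hQ c a u) b0 (in_setT _) hb0 d.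
rewrite cardsT card_mx hF mul1n => <-; congr (4 * _)%N.
by apply: eq_card => u; rewrite !inE.
Qed.

Lemma N1_0_eq c c' : N1 c 0 = N1 c' 0.
Proof.
suff le : forall c c', (N1 c 0%R <= N1 c' 0%R)%N by apply/eqP; rewrite eqn_leq !le.
move=> {}c {}c'; have [s hs] := sqrt_ex hF ((c' - c) / mu).
rewrite /N1 -(card_imset _ (addIr (s *: a))); apply: subset_leq_card.
apply/subsetP => _ /imsetP [u hu ->]; move: hu; rewrite !inE => /andP [/eqP qu /eqP pu].
rewrite polDr // polZr // polxx // mulr0 addr0 pu eqxx andbT.
rewrite QD // QZ // polZr // polC pu mulr0 addr0 hs ha qu.
by rewrite mulfVK ?(mu_neq0 hmu) // addrC subrK.
Qed.

Lemma N1_d_eq d : d != 0 -> N1 0 d = N1 0 1.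
Proof.
move=> d0.
suff le : forall d1 d2, d1 != 0 -> d2 != 0 -> (N1 0%R d1 <= N1 0%R d2)%N.
  by apply/eqP; rewrite eqn_leq !le ?oner_neq0.
move=> d1 d2 h1 h2; rewrite /N1.
rewrite -(card_imset _ (scalerI (a := d2 / d1) _)); last by rewrite mulf_neq0 ?invr_eq0.
apply: subset_leq_card.
apply/subsetP => _ /imsetP [u hu ->]; move: hu; rewrite !inE => /andP [/eqP qu /eqP pu].
by rewrite QZ // qu mulr0 polZr // pu mulfVK // !eqxx.
Qed.

Lemma N1_1_shift c : N1 c 1 = N1 (c + mu + 1) 1.
Proof.
suff le : forall c, (N1 c 1%R <= N1 (c + mu + 1)%R 1%R)%N.
  apply/eqP; rewrite eqn_leq le /=.
  have := le (c + mu + 1).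
  have -> : c + mu + 1 + mu + 1 = c.
    by rewrite -[c + mu + 1 + mu + 1]addrA -[c + mu + 1]addrA -addrA (addxx hF) addr0.
  by [].
move=> {}c; rewrite /N1 -(card_imset _ (addIr a)); apply: subset_leq_card.
apply/subsetP => _ /imsetP [u hu ->]; move: hu; rewrite !inE => /andP [/eqP qu /eqP pu].
by rewrite polDr // polxx // addr0 pu QD // polC pu qu ha !eqxx.
Qed.

Lemma deg_eq (t : nat) (ht : (4 ^ n = 16 * t * t)%N) :
  (3 * (#|[set b in [set b | Q b == mu] | (a != b) && (tr4 (pol a b) == 0%R)]| + 1)
    + #|[set u | Q u == 0%R]| = 10 * t * t)%N.
Proof.
have h0 : N1 mu 0 = (t * t)%N.
  have := fib_pol 0; rewrite (card_part _ Q).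
  under eq_bigr => c _ do rewrite -/(N2 c 0) -N12 (N1_0_eq c mu).
  rewrite sum_nat_const cardT -cardE hF ht => h. nia.
have h1 : #|[set u | Q u == 0]| = (N1 mu 0%R + 3 * N1 0%R 1%R)%N.
  rewrite (card_part _ (pol a)) -/(N1 0 _).
  under eq_bigr => d _ do rewrite -/(N1 0 d).
  rewrite (sumF hF hmu) (N1_0_eq 0 mu) (N1_d_eq (mu_neq0 hmu)).
  rewrite (N1_d_eq (mu1_neq0 hF hmu)); rewrite -!addnA; congr addn; rewrite !mulSn mul0n addn0 //.
have h2 : (N1 0%R 1%R + N1 mu 1%R = 2 * t * t)%N.
  have := fib_pol 1; rewrite (card_part _ Q).
  under eq_bigr => c _ do rewrite -/(N2 c 1) -N12.
  rewrite (sumF hF hmu) (N1_1_shift 0) (N1_1_shift 1) add0r.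
  have -> : 1 + mu + 1 = mu by rewrite addrC addrA (addxx hF) add0r.
  rewrite ht => h; nia.
set S0 := [set b in [set b | Q b == mu] | tr4 (pol a b) == 0].
have aS0 : a \in S0 by rewrite !inE ha polxx // /tr4 expr0n addr0 !eqxx.
have eD : [set b in [set b | Q b == mu] | (a != b) && (tr4 (pol a b) == 0)] = S0 :\ a.
  by apply/setP => b; rewrite !inE (eq_sym a b); case: (b == a); rewrite /= ?andbF.
have eS0 : #|S0| = (N1 mu 0%R + N1 mu 1%R)%N.
  rewrite (cardsKsplit [set b | pol a b == 0]) /N1; congr addn; apply: eq_card => u;
  rewrite !inE; move: (pol a u) => p; case: (Q u == mu); rewrite ?andbF ?andbT //=;
  rewrite (tr4_0 hF); case: (eqVneq p 0) => [->|p0]; rewrite ?eqxx ?(negbTE p0) //=.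
  by rewrite (eq_sym 0 1) oner_eq0.
rewrite eD; move: eS0; rewrite (cardsD1 a S0) aS0 h1 => eS0.
nia.
Qed.

End Deg.

Lemma Nc_eq (F : finFieldType) (hF : #|F| = 4%N) n (Q : 'rV[F]_n -> F) (hQ : is_quadform Q)
  (c c' : F) : c != 0 -> c' != 0 -> #|[set u | Q u == c]| = #|[set u | Q u == c']|.
Proof.
suff le : forall c c', c != 0 -> c' != 0 -> (#|[set u | Q u == c]| <= #|[set u | Q u == c']|)%N.
  by move=> h h'; apply/eqP; rewrite eqn_leq !le.
move=> {}c {}c' h h'; have [s hs] := sqrt_ex hF (c' / c).
have s0 : s != 0.
  apply: contraNneq (mulf_neq0 h' (invr_neq0 h)) => s0.
  by rewrite -hs s0 expr0n.
rewrite -(card_imset _ (scalerI s0)); apply: subset_leq_card.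
apply/subsetP => _ /imsetP [u hu ->]; move: hu; rewrite !inE => /eqP qu.
by rewrite QZ // hs qu mulfVK.
Qed.

Lemma pow4 k : (4 ^ (2 * k.+1) = 16 * 4 ^ k * 4 ^ k)%N.
Proof. by rewrite mulnS expnD mul2n -addnn expnD mulnA. Qed.

Lemma N0_val (F : finFieldType) (hF : #|F| = 4%N) (k : nat) (Q : 'rV[F]_(2 * k.+1) -> F)
  (hQ : is_quadform Q) (hnd : qf_nondegenerate Q) (plus : bool) (htype : qf_type Q plus) :
  (#|[set u | Q u == 0%R]| =
     if plus then 4 * 4 ^ k * 4 ^ k + 3 * 4 ^ k else 4 * 4 ^ k * 4 ^ k - 3 * 4 ^ k)%N.
Proof.
move: htype; rewrite /qf_type /witt_index => -[[U [hts hr]] hmax].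
pose W := [set v : 'rV[F]_(2 * k.+1) | (v <= U)%MS].
pose K := [set v : 'rV[F]_(2 * k.+1) | U *m gram Q *m v^T == 0].
have hW : W = [set v | (v <= U)%MS] by [].
have hK : K = [set v | U *m gram Q *m v^T == 0] by [].
have ho := out_count hF hQ hnd hts hW hK 0.
rewrite (cardsKsplit K).
have p4 := pow4 k.
case: plus hr hmax => /= hr hmax.
  rewrite (plus_case hF hQ hnd hts hW hK); last by rewrite hr; lia.
  move: ho; rewrite hr p4.
  have -> : (2 * k.+1 - k.+1 = k.+1)%N by lia.
  rewrite expnS; set N := #|[set u in ~: K | Q u == 0]|; generalize (4 ^ k)%N => t; nia.
rewrite (minus_case hF hQ hts hW hK); last by move=> V /hmax; rewrite hr.
move: ho; rewrite hr p4.
have -> : (2 * k.+1 - k = k.+2)%N by lia.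
rewrite !expnS; set N := #|[set u in ~: K | Q u == 0]|; generalize (4 ^ k)%N => t; nia.
Qed.

Lemma Ncount (F : finFieldType) (hF : #|F| = 4%N) (k : nat) (Q : 'rV[F]_(2 * k.+1) -> F)
  (hQ : is_quadform Q) (mu : F) (hmu : mu ^+ 2 + mu + 1 = 0) :
  (16 * 4 ^ k * 4 ^ k = #|[set u | Q u == 0%R]| + 3 * #|[set u | Q u == mu]|)%N.
Proof.
have := card_part [set: 'rV[F]_(2 * k.+1)] Q.
rewrite cardsT card_mx hF mul1n pow4 (sumF hF hmu) => ->.
have e : forall c, #|[set u in [set: 'rV[F]_(2 * k.+1)] | Q u == c]| = #|[set u | Q u == c]|.
  by move=> c; apply: eq_card => u; rewrite !inE.
rewrite !e (Nc_eq hF hQ (oner_neq0 F) (mu_neq0 hmu)).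
rewrite (Nc_eq hF hQ (mu1_neq0 hF hmu) (mu_neq0 hmu)); lia.
Qed.

Lemma eqF2 (F : finFieldType) (hF : #|F| = 4%N) (x y : F) : (x == y) = (x + y == 0).
Proof. by rewrite -subr_eq0 (subF hF). Qed.

Lemma sw (F : finFieldType) (hF : #|F| = 4%N) (lam : F) (hlam : lam ^+ 2 + lam + 1 = 0)
  (qa qb p : F) : (qa == lam) || (qa == lam + 1) -> (qb == lam) || (qb == lam + 1) ->
  (qa + qb + p == p ^+ 2) = if (qa == lam) != (qb == lam) then ~~ (tr4 p == 0) else tr4 p == 0.
Proof.
have same : forall q, q + q + p == p ^+ 2 = (tr4 p == 0).
  by move=> q; rewrite (addxx hF) add0r (eqF2 hF) /tr4.
have diff : (lam + (lam + 1) + p == p ^+ 2) = ~~ (tr4 p == 0).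
  rewrite addrA (addxx hF) add0r.
  have := tr4_01 hF p; case: (eqVneq (tr4 p) 0) => [h0 _|h0 /= h1].
    rewrite (eqF2 hF) -addrA -/(tr4 p) h0 addr0 oner_eq0 //.
  rewrite (eqF2 hF) -addrA -/(tr4 p) (eqP h1) (addxx hF) eqxx //.
have l1 : lam + 1 != lam by exact: mu1_neqmu.
case/orP => /eqP -> /orP [] /eqP ->; rewrite ?eqxx ?(negbTE l1) /= ?same //.
  all: try by rewrite diff.
  all: by rewrite [lam + 1 + lam]addrC diff.
Qed.

Theorem proposition4p8 (F : finFieldType) (hF : #|F| = 4%N) (m : nat) (hm : (1 <= m)%N)
  (Q : 'rV[F]_(2 * m) -> F) (plus : bool)
  (hQ : is_quadform Q) (hnd : qf_nondegenerate Q) (htype : qf_type Q plus)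
  (lam : F) (hlam : lam ^+ 2 + lam + 1 = 0) :
  let X := [set a | tr4 (Q a) == 1] in
  let adj1 : rel 'rV[F]_(2 * m) := fun a b => (a != b) && (tr4 (polar Q a b) == 0) in
  let adj2 : rel 'rV[F]_(2 * m) := fun a b => (a != b) && (Q (a + b) == (polar Q a b) ^+ 2) in
  let A := [set a | Q a == lam] in
  let B := [set a | Q a == lam + 1] in
  [/\ X = A :|: B,
      {in X &, forall a b, adj2 a b = seidel_switch adj1 A a b} /\
      {in X &, forall a b, adj2 a b = seidel_switch adj1 B a b},
      #|A| = (if plus then 2 ^ (4 * m - 2) - 2 ^ (2 * m - 2) else 2 ^ (4 * m - 2) + 2 ^ (2 * m - 2))%N,
      #|B| = #|A| &
      forall (G : rel 'rV[F]_(2 * m)), G = adj1 \/ G = adj2 ->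
      forall Y : {set 'rV[F]_(2 * m)}, Y = A \/ Y = B ->
      {in Y, forall a, (#|[set b in Y | G a b]| : int) =
          (2 ^ (4 * m - 3))%N%:Z - (if plus then (2 ^ (2 * m - 2))%N%:Z else - (2 ^ (2 * m - 2))%N%:Z) - 1}].
Proof.
case: m hm Q hQ hnd htype => [//|k] _ Q hQ hnd htype.
move=> X adj1 adj2 A B.
have hlam1 : (lam + 1) ^+ 2 + (lam + 1) + 1 = 0.
  rewrite (sqrD hF) (mu2 hF hlam) expr1n -[lam + 1 + 1]addrA (addxx hF 1) addr0.
  by rewrite addrA (addxx hF lam) add0r (addxx hF 1).
pose t := (4 ^ k)%N.
have t2 : t = (2 ^ (2 * k))%N by rewrite expnM.
have tpos : (0 < t)%N by rewrite expn_gt0.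
have p1 : (2 ^ (4 * k.+1 - 2) = 4 * t * t)%N.
  have -> : (4 * k.+1 - 2 = 2 + 2 * k + 2 * k)%N by lia.
  by rewrite (expnD 2 (2 + 2 * k)) (expnD 2 2) -t2.
have p2 : (2 ^ (2 * k.+1 - 2) = t)%N.
  by have -> : (2 * k.+1 - 2 = 2 * k)%N by lia.
have p3 : (2 ^ (4 * k.+1 - 3) = 2 * t * t)%N.
  have -> : (4 * k.+1 - 3 = 1 + 2 * k + 2 * k)%N by lia.
  by rewrite (expnD 2 (1 + 2 * k)) (expnD 2 1) -t2.
have hN0 := N0_val hF hQ hnd htype.
have hNA := Ncount hF hQ hlam.
have hBA : #|B| = #|A| by apply: (Nc_eq hF hQ (mu1_neq0 hF hlam) (mu_neq0 hlam)).
split.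
- by apply/setP => a; rewrite !inE (tr4_1 hF hlam).
- have hX : forall a, a \in X -> (Q a == lam) || (Q a == lam + 1).
    by move=> a; rewrite inE (tr4_1 hF hlam).
  have hB : forall a, a \in X -> (a \in B) = ~~ (a \in A).
    move=> a /hX; rewrite !inE; case/orP => /eqP ->; rewrite eqxx.
      by rewrite eq_sym (negbTE (mu1_neqmu lam)).
    by rewrite mu1_neqmu.
  have main : forall a b, a \in X -> b \in X ->
      adj2 a b = if (a \in A) != (b \in A) then (a != b) && ~~ adj1 a b else adj1 a b.
    move=> a b ha hb; rewrite /adj1 /adj2 (QD hF) (sw hF hlam _ (hX a ha) (hX b hb)) !inE.
    case: ((Q a == lam) != (Q b == lam)); case: (a != b) => //.
  split => a b ha hb; rewrite /seidel_switch main //.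
  by rewrite !hB //; case: (a \in A); case: (b \in A).
- rewrite p1 p2; move: hNA; rewrite -/A -/t hN0.
  by case: plus {htype hN0}; set N := #|A|; nia.
- exact: hBA.
move=> G hG Y hY a aY.
have [mu hmu eY] : exists2 mu, mu ^+ 2 + mu + 1 = 0 & Y = [set b | Q b == mu].
  by case: hY => ->; [exists lam | exists (lam + 1)].
have qa : Q a = mu by move: aY; rewrite eY inE => /eqP.
have eG : [set b in Y | G a b] =
    [set b in [set b | Q b == mu] | (a != b) && (tr4 (polar Q a b) == 0)].
  apply/setP => b; rewrite eY !inE; case qb: (Q b == mu) => //=.
  case: hG => -> //; rewrite /adj2 (QD hF) qa (eqP qb) (addxx hF) add0r.
  by rewrite (eqF2 hF) /tr4.
rewrite eG.
have hd := deg_eq hF hQ hnd hmu qa (pow4 k).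
rewrite p3 p2; move: hd; rewrite hN0 -/t.
set D := #|_|.
by case: plus {htype hN0}; nia.
Qed.
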